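(* Let $n\ge4$, $p$ a prime with $p\ge\max\{n-2,3\}$, and $1\le j\le n-3$. For $t=(t_1,\dots,t_n)\in\{0,\dots,p-1\}^n$ set $d_t=\sum_it_i$, let $q^0_{jt}=(j+d_t)/p$ if $j+d_t\equiv0\pmod p$ (undefined otherwise), and $q^1_{jt}=(j+d_t-p+2)/p$ if $j+d_t-p+2\equiv0\pmod p$ (undefined otherwise). Then $q^0_{jt}$ and $q^1_{jt}$ are never both defined. Moreover, whenever defined, $q^0_{jt}\in[1,n-1]$ if $(j,p)\neq(1,n-2)$ and $q^0_{jt}\in[1,n-2]$ if $(j,p)=(1,n-2)$; and $q^1_{jt}\in[0,n-2]$ if $(j,p)\ne(n-3,n-2)$ and $q^1_{jt}\in[1,n-2]$ if $(j,p)=(n-3,n-2)$. All integer values in these intervals occur as $t$ varies.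
   Context: Intervals $[a,b]$ denote sets of integers. *)

(* Defs.v *)
From mathcomp Require Import all_boot all_order all_algebra.
Set Implicit Arguments. Unset Strict Implicit. Unset Printing Implicit Defensive.
Import Order.TTheory GRing.Theory Num.Theory.

Definition dsum (n p : nat) (t : 'I_n -> 'I_p) : nat := (\sum_(i < n) (t i : nat))%N.

Definition q0 (n p j : nat) (t : 'I_n -> 'I_p) : option int :=
  let a : int := (j%:Z + (dsum t)%:Z)%R in
  if (p%:Z %| a)%Z then Some (a %/ p%:Z)%Z else None.

Definition q1 (n p j : nat) (t : 'I_n -> 'I_p) : option int :=
  let a : int := (j%:Z + (dsum t)%:Z - p%:Z + 2)%R in
  if (p%:Z %| a)%Z then Some (a %/ p%:Z)%Z else None.

(* Main.v *)
Require Import Defs.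
From mathcomp Require Import all_boot all_order all_algebra.
From mathcomp Require Import zify.
Import Order.TTheory GRing.Theory Num.Theory.
Local Open Scope ring_scope.

Lemma someP (a P q : int) :
  (if (P %| a)%Z then Some (a %/ P)%Z else None) = Some q -> a = q * P.
Proof.
case: ifP => // hd [<-]; by move: hd; rewrite dvdz_eq => /eqP.
Qed.

Lemma mkSome (q P : int) : P != 0 ->
  (if (P %| q * P)%Z then Some ((q * P) %/ P)%Z else None) = Some q.
Proof.
move=> hP; rewrite dvdz_mull ?dvdzz // mulzK //.
Qed.

Lemma dsum_le n p (t : 'I_n -> 'I_p) : (dsum t <= n * (p - 1))%N.
Proof.
rewrite /dsum -[n in (_ <= n * _)%N]card_ord -sum_nat_const.
apply: leq_sum => i _; have := ltn_ord (t i); lia.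
Qed.

Lemma sum_min (c d m : nat) :
  (\sum_(i < m) minn c (d - i * c))%N = minn d (m * c).
Proof.
elim: m => [|m IH]; first by rewrite big_ord0; lia.
rewrite big_ord_recr /= IH; lia.
Qed.

Definition mk n p (hp : (0 < p)%N) (d : nat) : 'I_n -> 'I_p :=
  fun i => @Ordinal p (minn (p - 1) (d - i * (p - 1))) (ltac:(lia)).

Lemma dsum_mk n p (hp : (0 < p)%N) d : (d <= n * (p - 1))%N -> dsum (mk n p hp d) = d.
Proof.
move=> hd; rewrite /dsum /mk /=.
rewrite (eq_bigr (fun i : 'I_n => minn (p - 1) (d - i * (p - 1)))) //.
rewrite sum_min; lia.
Qed.

Theorem lemma6p4 (n p j : nat) (hn : (4 <= n)%N) (hp : prime p)
  (hpn : (maxn (n - 2) 3 <= p)%N) (hj1 : (1 <= j)%N) (hj2 : (j <= n - 3)%N) :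
  let hi0 : int := if (j == 1%N) && (p == (n - 2)%N) then (n - 2)%N%:Z else (n - 1)%N%:Z in
  let lo1 : int := if (j == (n - 3)%N) && (p == (n - 2)%N) then 1 else 0 in
  let hi1 : int := (n - 2)%N%:Z in
  (forall t : 'I_n -> 'I_p, q0 j t = None \/ q1 j t = None) /\
  (forall (t : 'I_n -> 'I_p) (q : int), q0 j t = Some q -> 1 <= q <= hi0) /\
  (forall (t : 'I_n -> 'I_p) (q : int), q1 j t = Some q -> lo1 <= q <= hi1) /\
  (forall q : int, 1 <= q <= hi0 -> exists t : 'I_n -> 'I_p, q0 j t = Some q) /\
  (forall q : int, lo1 <= q <= hi1 -> exists t : 'I_n -> 'I_p, q1 j t = Some q).
Proof.
move=> hi0 lo1 hi1.
have p0 : (0 < p)%N by apply: prime_gt0.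
have pZ : p%:Z != 0 by rewrite eqz_nat -lt0n.
split.
  move=> t; rewrite /q0 /q1.
  case E0: (if _ then _ else _) => [k0|]; last by left.
  case E1: (if _ then _ else _) => [k1|]; last by right.
  move/someP: E0 => E0; move/someP: E1 => E1; exfalso.
  have hd := dsum_le n p t.
  have : (k0 - k1 - 1) * p%:Z = -2 by rewrite !mulrBl -E0 -E1 mul1r; lia.
  have hp3 : (3 <= p)%N by lia.
  move: (k0 - k1 - 1) => x hx.
  have [x0|[x1|x2]] : x = 0 \/ 1 <= x \/ x <= -1 by lia.
  - by move: hx; rewrite x0 mul0r.
  - have : 1 * p%:Z <= x * p%:Z by rewrite ler_pM2r //; lia.
    lia.
  - have : x * p%:Z <= (-1) * p%:Z by rewrite ler_pM2r //; lia.
    lia.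
split.
  move=> t q; rewrite /q0 => /someP E; have hd := dsum_le n p t.
  rewrite /hi0; case: ifP => /andP; [case=> /eqP hj /eqP hpe| move=> hne]; nia.
split.
  move=> t q; rewrite /q1 => /someP E; have hd := dsum_le n p t.
  rewrite /lo1 /hi1; case: ifP => /andP; [case=> /eqP hj /eqP hpe| move=> hne]; nia.
split.
  move=> q hq.
  have [d [hd Ed]] : exists d : nat, (d <= n * (p - 1))%N /\ (j%:Z + d%:Z = q * p%:Z).
    exists (absz (q * p%:Z - j%:Z)%R); move: hq; rewrite /hi0.
    case: ifP => /andP; [case=> /eqP hj /eqP hpe| move=> hne]; nia.
  exists (mk n p p0 d); rewrite /q0 dsum_mk // Ed; exact: mkSome.
move=> q hq.
have [d [hd Ed]] : exists d : nat, (d <= n * (p - 1))%N /\ (j%:Z + d%:Z - p%:Z + 2 = q * p%:Z).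
  exists (absz (q * p%:Z - j%:Z + p%:Z - 2)%R); move: hq; rewrite /lo1 /hi1.
  case: ifP => /andP; [case=> /eqP hj /eqP hpe| move=> hne]; nia.
exists (mk n p p0 d); rewrite /q1 dsum_mk // Ed; exact: mkSome.
Qed.
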